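(* Let $q$ be a prime power and $e,m$ positive integers with $q=em+1$. Let $a_0=1,a_1,\dots,a_{e-1}\in\mathbb{F}_q^*$ with $a_i\in D_i^e$ for each $i$, and let $M$ be the $e\times e$ matrix with entries $M_{ij}=a_{i-1}^{-1}a_{j-1}$ for $1\le i,j\le e$. Then the $e\times e$ block matrix whose $(i,j)$ block is $C_{M_{ij}}$ is the adjacency matrix of a directed strongly regular graph with parameters $(e(em+1),\ em,\ m,\ m-1,\ m)$.
   Context: Fix a primitive element $\gamma$ of $\mathbb{F}_q$; $D_i^e=\gamma^i\langle\gamma^e\rangle$, $i=0,\dots,e-1$, are the cyclotomic classes of order $e$. For $\sigma\in\mathbb{F}_q^*$, $C_\sigma$ is the $q\times q$ $0$-$1$ matrix with rows and columns indexed by $\mathbb{F}_q$ and $(C_\sigma)_{x,y}=1$ iff $x\in\sigma y+D_0^e$. A directed strongly regular graph with parameters $(v,k,t,\lambda,\mu)$ is a digraph (no loops, no multiple arcs) on $v$ vertices whose adjacency matrix $A$ satisfies $A^2=tI+\lambda A+\mu(J-I-A)$ and $AJ=JA=kJ$. *)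

(* Defs.v *)
From HB Require Import structures.
From mathcomp Require Import all_boot all_order all_algebra all_field.
Set Implicit Arguments. Unset Strict Implicit. Unset Printing Implicit Defensive.
Import GRing.Theory.
Local Open Scope ring_scope.

Definition is_dsrg (n : nat) (A : 'M[int]_n) (v k t lam mu : nat) : Prop :=
  let J : 'M[int]_n := const_mx 1 in
  let I : 'M[int]_n := 1%:M in
  v = n /\
  [/\ (forall i j, A i j = 0 \/ A i j = 1),
      (forall i, A i i = 0),
      A *m A = (t%:Z) *: I + (lam%:Z) *: A + (mu%:Z) *: (J - I - A),
      A *m J = (k%:Z) *: J
    & J *m A = (k%:Z) *: J].

Definition fmx (V : finType) (f : V -> V -> int) : 'M[int]_#|V| :=
  \matrix_(i, j) f (enum_val i) (enum_val j).

Definition cyc_class (F : finFieldType) (gamma : F) (e i : nat) : {set F} :=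
  [set x : F | [exists k : 'I_#|F|, x == gamma ^+ (i + e * k)]].

Definition Cmx (F : finFieldType) (gamma : F) (e : nat) (sigma : F) (x y : F) : int :=
  if (x - sigma * y) \in cyc_class gamma e 0 then 1 else 0.

(* e x e block matrix with (i,j) block C_{M_ij}, M_ij = a_i^{-1} a_j (0-indexed);
   rows/columns indexed by pairs (block index, field element). *)
Definition block_adj (F : finFieldType) (gamma : F) (e : nat) (a : 'I_e -> F)
  (u w : 'I_e * F) : int :=
  Cmx gamma e ((a u.1)^-1 * a w.1) u.2 w.2.

(* Main.v *)
Require Import Defs.
From HB Require Import structures.
From mathcomp Require Import all_boot all_order all_algebra all_field zify ring.
Import GRing.Theory.
Set Implicit Arguments. Unset Strict Implicit.
Local Open Scope ring_scope.

Lemma modadd_eq (i c e : nat) : (i < e)%N -> (c < e)%N -> ((i + c) %% e == i)%N = (c == 0)%N.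
Proof.
move=> h1 h2. case: (ltnP (i + c) e) => h.
  rewrite modn_small //; apply/eqP/eqP; lia.
have -> : (i + c = (i + c - e) + e)%N by lia.
rewrite modnDr modn_small; last lia.
apply/eqP/eqP; lia.
Qed.

Section NT.
Variables (F : finFieldType) (gamma : F) (e m : nat).
Hypotheses (prim : (#|F|.-1).-primitive_root gamma) (e0 : (0 < e)%N) (m0 : (0 < m)%N)
  (qF : #|F| = (e * m + 1)%N).

Lemma NE : (#|F|.-1 = e * m)%N.
Proof. by rewrite qF addn1. Qed.

Definition lg (x : F) : nat :=
  if [pick k : 'I_(#|F|.-1) | gamma ^+ k == x] is Some k then val k else 0%N.

Lemma gamma_neq0 : gamma != 0.
Proof.
apply/eqP => g0; move: (prim_expr_order prim); rewrite g0 expr0n NE.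
have -> : (e * m == 0)%N = false by apply/eqP; lia.
by move/eqP; rewrite eq_sym oner_eq0.
Qed.

Lemma unitN (x : F) : x != 0 -> x ^+ #|F|.-1 = 1.
Proof.
move=> xn; apply: (mulfI xn); rewrite -exprS mulr1 prednK ?expf_card //.
by rewrite qF addn1.
Qed.

Lemma lgP (x : F) : x != 0 -> gamma ^+ lg x = x.
Proof.
move=> xn; rewrite /lg; case: pickP => [k /eqP //|H].
have [i Hi] := prim_rootP prim (unitN xn).
by move: (H i); rewrite -Hi eqxx.
Qed.

Lemma lg_lt (x : F) : (lg x < e * m)%N.
Proof.
rewrite /lg -NE; case: pickP => [k _|_]; first exact: ltn_ord.
by rewrite NE muln_gt0 e0 m0.
Qed.

Lemma lg_exp n : lg (gamma ^+ n) = (n %% (e * m))%N.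
Proof.
have nz := expf_neq0 n gamma_neq0.
have := lgP nz; move/eqP; rewrite -{2}(prim_expr_mod prim n).
rewrite (eq_prim_root_expr prim) NE modn_mod => /eqP <-.
by rewrite modn_small //; apply: lg_lt.
Qed.

Definition chi (x : F) : nat := (lg x %% e)%N.

Lemma chi_lt (x : F) : (chi x < e)%N.
Proof. exact: ltn_pmod. Qed.

Lemma memD (i : nat) (x : F) : (i < e)%N ->
  (x \in cyc_class gamma e i) = (x != 0) && (chi x == i).
Proof.
move=> ie; rewrite inE; apply/existsP/andP.
- case=> k /eqP ->; split; first exact: expf_neq0 _ gamma_neq0.
  rewrite /chi lg_exp (modn_dvdm _ (dvdn_mulr _ (dvdnn e))).
  by rewrite mulnC addnC modnMDl modn_small.
- case=> xn /eqP ci.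
  have k : (lg x %/ e < #|F|)%N.
    rewrite qF; apply: (leq_ltn_trans (leq_div _ _)).
    have := lg_lt x; lia.
  exists (Ordinal k) => /=.
  by rewrite -{1}(lgP xn) {1}(divn_eq (lg x) e) -/(chi x) ci addnC mulnC.
Qed.

Lemma chiM (u v : F) : u != 0 -> v != 0 -> chi (u * v) = ((chi u + chi v) %% e)%N.
Proof.
move=> un vn; rewrite /chi -{1}(lgP un) -{1}(lgP vn) -exprD lg_exp.
by rewrite (modn_dvdm _ (dvdn_mulr _ (dvdnn e))) modnDm.
Qed.

Lemma card_cls (i : nat) : (i < e)%N ->
  #|[pred w : F | (w != 0) && (chi w == i)]| = m.
Proof.
move=> ie.
have inj : injective (fun k : 'I_m => gamma ^+ (i + e * k)).
  move=> k1 k2 /eqP; rewrite (eq_prim_root_expr prim) NE !modn_small.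
  - move/eqP => H; apply/val_inj => /=; nia.
  - have := ltn_ord k2; nia.
  - have := ltn_ord k1; nia.
rewrite -[RHS]card_ord -(card_imset _ inj).
apply: eq_card => w; rewrite inE /=; apply/andP/imsetP.
- case=> wn /eqP cw.
  have k : (lg w %/ e < m)%N by rewrite ltn_divLR // mulnC lg_lt.
  exists (Ordinal k) => //=.
  by rewrite -{1}(lgP wn) {1}(divn_eq (lg w) e) -/(chi w) cw addnC mulnC.
- case=> k _ ->; split; first exact: expf_neq0 _ gamma_neq0.
  rewrite /chi lg_exp (@modn_small (i + e * k)); last by have := ltn_ord k; nia.
  by rewrite mulnC addnC modnMDl modn_small.
Qed.


Variables (a : 'I_e -> F) (ha : forall i : 'I_e, a i \in cyc_class gamma e i).

Lemma a_nz i : a i != 0.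
Proof. by have := ha i; rewrite memD // => /andP[]. Qed.

Lemma chi_a i : chi (a i) = i.
Proof. by have := ha i; rewrite memD // => /andP[_ /eqP]. Qed.

Definition P (i : nat) (w : F) : bool := (w != 0) && (chi w == i).

Lemma Cmx_P (i l : 'I_e) x y :
  block_adj gamma a (i, x) (l, y) = (P i (a i * x - a l * y))%:R.
Proof.
rewrite /block_adj /Cmx /= memD //.
set w := x - _ * y.
have -> : a i * x - a l * y = a i * w.
  by rewrite /w mulrBr !mulrA mulfV ?a_nz ?mul1r.
case: (eqVneq w 0) => [->|wn]; first by rewrite mulr0 /P eqxx.
rewrite /P mulf_neq0 ?a_nz //= chiM ?a_nz // chi_a modadd_eq ?chi_lt //.
by case: (chi w == 0%N).
Qed.

Lemma sum_mul (c : F) (H : F -> int) : c != 0 -> \sum_y H (c * y) = \sum_y H y.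
Proof. by move=> cn; rewrite [RHS](reindex_inj (mulfI cn)). Qed.

Lemma sum_sub (X : F) (H : F -> int) : \sum_y H (X - y) = \sum_y H y.
Proof.
have inj : injective (fun y => X - y) by move=> y1 y2 /addrI /oppr_inj.
by rewrite [RHS](reindex_inj inj).
Qed.

Lemma sum_subr (Z : F) (H : F -> int) : \sum_y H (y - Z) = \sum_y H y.
Proof. by rewrite [RHS](reindex_inj (addIr (- Z))). Qed.

Lemma sumP (i : nat) : (i < e)%N -> \sum_(w : F) ((P i w)%:R : int) = m%:R.
Proof.
move=> ie; rewrite -natr_sum -(card_cls ie) -sum1_card /=.
congr (_ %:R); rewrite [RHS]big_mkcond; apply: eq_bigr => w _ /=; rewrite /P inE /=; by case: (_ && _).
Qed.

Lemma sumcls (w : F) : \sum_(l < e) ((P l w)%:R : int) = (w != 0)%:R.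
Proof.
case: (eqVneq w 0) => [->|wn].
  by rewrite big1 // => l _; rewrite /P eqxx.
rewrite (bigD1 (Ordinal (chi_lt w))) //= big1 ?addr0; first by rewrite /P wn eqxx.
move=> l hl; rewrite /P wn /=; case: eqP => // h; move: hl.
by rewrite -val_eqE /= h eqxx.
Qed.

Lemma sum_pair (G : 'I_e * F -> int) : \sum_(v : 'I_e * F) G v = \sum_l \sum_y G (l, y).
Proof. by rewrite pair_bigA; apply: eq_bigr => -[]. Qed.

Lemma rowsum (u : 'I_e * F) : \sum_v block_adj gamma a u v = (e * m)%:R.
Proof.
case: u => i x; rewrite sum_pair.
rewrite (eq_bigr (fun _ => (m%:R : int))); last first.
  move=> l _; under eq_bigr => y _ do rewrite Cmx_P.
  rewrite (sum_mul (fun t => (P i (a i * x - t))%:R) (a_nz l)).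
  by rewrite (sum_sub (a i * x) (fun t => (P i t)%:R)) sumP.
by rewrite sumr_const card_ord natrM mulr_natl.
Qed.

Lemma colsum (w : 'I_e * F) : \sum_v block_adj gamma a v w = (e * m)%:R.
Proof.
case: w => j z; rewrite sum_pair.
rewrite (eq_bigr (fun _ => (m%:R : int))); last first.
  move=> l _; under eq_bigr => y _ do rewrite Cmx_P.
  rewrite (sum_mul (fun t => (P l (t - a j * z))%:R) (a_nz l)).
  by rewrite (sum_subr (a j * z) (fun t => (P l t)%:R)) sumP.
by rewrite sumr_const card_ord natrM mulr_natl.
Qed.

Lemma sqsum (u w : 'I_e * F) :
  \sum_v block_adj gamma a u v * block_adj gamma a v w =
  m%:R - block_adj gamma a u w.
Proof.
case: u => i x; case: w => j z; rewrite sum_pair Cmx_P.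
set X := a i * x; set Z := a j * z.
under eq_bigr => l _.
  under eq_bigr => y _ do rewrite !Cmx_P.
  rewrite (sum_mul (fun t => (P i (X - t))%:R * (P l (t - Z))%:R) (a_nz l)).
  over.
rewrite exchange_big /=.
under eq_bigr => y _ do rewrite -mulr_sumr sumcls.
have S : \sum_y ((P i (X - y))%:R : int) = m%:R.
  by rewrite (sum_sub X (fun t => (P i t)%:R)) sumP.
rewrite -S.
rewrite (bigD1 Z) //= subrr eqxx mulr0 add0r [in RHS](bigD1 Z) //=.
rewrite addrC addrK; apply: eq_bigr => y yZ.
by rewrite subr_eq0 yZ mulr1.
Qed.

End NT.


Lemma sum_enum (T : finType) (G : T -> int) :
  \sum_(k < #|T|) G (enum_val k) = \sum_v G v.
Proof. by rewrite -big_enum_val. Qed.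

Unset Implicit Arguments.

Theorem mainTheorem11 (F : finFieldType) (gamma : F) (e m : nat)
  (a : 'I_e -> F) :
  (#|F|.-1).-primitive_root gamma ->
  (0 < e)%N -> (0 < m)%N -> #|F| = (e * m + 1)%N ->
  (forall i : 'I_e, nat_of_ord i = 0%N -> a i = 1) ->
  (forall i : 'I_e, a i \in cyc_class gamma e i) ->
  is_dsrg (fmx (block_adj gamma a)) (e * (e * m + 1)) (e * m) m m.-1 m.
Proof.
move=> prim e0 m0 qF _ ha.
have sq := sqsum prim e0 m0 qF ha.
have rs := rowsum prim e0 m0 qF ha.
have cs := colsum prim e0 m0 qF ha.
rewrite /is_dsrg; split.
  by rewrite card_prod card_ord qF.
split.
- move=> r c; rewrite mxE /block_adj /Cmx; case: ifP => _; auto.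
- move=> r; rewrite mxE; case: (enum_val r) => i x.
  by rewrite (Cmx_P prim e0 m0 qF ha) subrr /P eqxx.
- apply/matrixP => r c; rewrite !mxE.
  under eq_bigr => k _ do rewrite !mxE.
  rewrite (sum_enum (fun v => block_adj gamma a (enum_val r) v * block_adj gamma a v (enum_val c))) sq.
  by rewrite natz (predn_int m0); ring.
- apply/matrixP => r c; rewrite !mxE.
  transitivity (\sum_v block_adj gamma a (enum_val r) v); last by rewrite rs mulr1 natz.
  by rewrite -sum_enum; apply: eq_bigr => k _; rewrite ?mxE ?mulr1.
- apply/matrixP => r c; rewrite !mxE.
  transitivity (\sum_v block_adj gamma a v (enum_val c)); last by rewrite cs mulr1 natz.
  by rewrite -sum_enum; apply: eq_bigr => k _; rewrite ?mxE ?mul1r.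
Qed.
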